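(* Let $\pi\in\mathfrak{S}_n$ avoid $231$. Let $A,B,C$ be the blocks of a collection of crossing $3$-cycles of $\pi$ (so $A<B<C$), and let $(e,f)$ with $e<f$ be a $2$-cycle of $\pi$. Then one of the following holds: (1) $f<A$; (2) $A<e<f<B$; (3) $A<e<B<f<C$; (4) $B<e<f<C$; (5) $C<e$.
   Context: A permutation avoids $231$ if there are no indices $i<j<k$ with $\pi_k<\pi_i<\pi_j$. A collection of crossing $3$-cycles of $\pi$ is a nonempty set of $3$-cycles $(a_i,c_i,b_i)$ (meaning $a_i\mapsto c_i\mapsto b_i\mapsto a_i$) of $\pi$, $i=1,\dots,p$, with $a_i<b_i<c_i$, such that $a_i<b_j<c_k$ for all $i,j,k$; its blocks are $A=\{a_i\}$, $B=\{b_i\}$, $C=\{c_i\}$. For sets $S,T$ and an element $t$, $S<T$ means $s<t'$ for all $s\in S,t'\in T$, and $S<t$ (resp. $t<S$) means $s<t$ (resp. $t<s$) for all $s\in S$. *)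

(* Defs.v *)
From mathcomp Require Import all_boot all_order all_fingroup.
Set Implicit Arguments. Unset Strict Implicit. Unset Printing Implicit Defensive.

(* Permutations of {1..n} are modelled as elements of 'S_n acting on 'I_n
   (positions 0..n-1); the order on 'I_n is the usual one on nat. *)

Definition avoids231 (n : nat) (pi : 'S_n) : Prop :=
  ~ exists i j k : 'I_n, [/\ i < j, j < k & pi k < pi i < pi j].

(* A 3-cycle (a,c,b) of pi with a<b<c: a |-> c |-> b |-> a.
   A triple t = (a,b,c). *)
Definition is_3cycle_abc (n : nat) (pi : 'S_n) (t : 'I_n * 'I_n * 'I_n) : Prop :=
  let: (a, b, c) := t in
  [/\ a < b, b < c, pi a = c, pi c = b & pi b = a].

Definition crossing_collection (n : nat) (pi : 'S_n)
    (S : {set 'I_n * 'I_n * 'I_n}) : Prop :=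
  [/\ S != set0,
      (forall t, t \in S -> is_3cycle_abc pi t) &
      (forall t1 t2 t3, t1 \in S -> t2 \in S -> t3 \in S ->
         t1.1.1 < t2.1.2 < t3.2)].

Definition blockA n (S : {set 'I_n * 'I_n * 'I_n}) : {set 'I_n} :=
  [set t.1.1 | t in S].
Definition blockB n (S : {set 'I_n * 'I_n * 'I_n}) : {set 'I_n} :=
  [set t.1.2 | t in S].
Definition blockC n (S : {set 'I_n * 'I_n * 'I_n}) : {set 'I_n} :=
  [set t.2 | t in S].

Definition set_lt_elt n (X : {set 'I_n}) (t : 'I_n) : Prop :=
  forall x, x \in X -> x < t.
Definition elt_lt_set n (t : 'I_n) (X : {set 'I_n}) : Prop :=
  forall x, x \in X -> t < x.

(* Main.v *)
Require Import Defs.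
From mathcomp Require Import all_boot all_order all_fingroup.
From mathcomp Require Import zify.
Lemma nat_single (a0 b0 c0 a b c e f : nat) : a0 < b0 -> b0 < c0 -> a < b -> b < c -> a0 < b -> a < b0 -> b0 < c -> b < c0 -> e < f -> (a0 < e -> e < c0 -> b0 < c0 -> c0 < f -> False) -> (e < a0 -> a0 < b0 -> a0 < f -> f < c0 -> False) -> e != a0 -> f != c0 -> (b0 < c0 -> c0 < f -> e < a0 -> a0 < b0 -> False) -> e != b0 -> f != b0 -> e != c0 -> f != a0 -> (f < a0) \/ (a0 < e /\ f < b0) \/ (a0 < e /\ e < b0 /\ b0 < f /\ f < c0) \/ (b0 < e /\ f < c0) \/ (c0 < e).
Proof. move=> *; lia. Qed.

Lemma nat_0_f_a (a0 b0 c0 a b c e f : nat) : a0 < b0 -> b0 < c0 -> a < b -> b < c -> a0 < b -> a < b0 -> b0 < c -> b < c0 -> e < f -> (e < a0 -> a0 < b -> a < f -> f < c0 -> False) -> f != a -> (f < a0) -> f < a.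
Proof. move=> *; lia. Qed.

Lemma nat_1_a_e (a0 b0 c0 a b c e f : nat) : a0 < b0 -> b0 < c0 -> a < b -> b < c -> a0 < b -> a < b0 -> b0 < c -> b < c0 -> e < f -> (e < a -> a < b0 -> a0 < f -> f < c -> False) -> e != a -> (a0 < e /\ f < b0) -> a < e.
Proof. move=> *; lia. Qed.

Lemma nat_1_f_b (a0 b0 c0 a b c e f : nat) : a0 < b0 -> b0 < c0 -> a < b -> b < c -> a0 < b -> a < b0 -> b0 < c -> b < c0 -> e < f -> c0 != c -> (e < c0 -> c0 < c -> b < f -> f < b0 -> False) -> f != b -> (b < f -> f < b0 -> a0 < a -> a < e -> False) -> (a < a0 -> a0 < e -> f < c -> c < c0 -> False) -> a0 != a -> (e < a -> a < b0 -> a0 < f -> f < c -> False) -> e != a -> (a0 < e /\ f < b0) -> f < b.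
Proof. move=> *; lia. Qed.

Lemma nat_2_a_e (a0 b0 c0 a b c e f : nat) : a0 < b0 -> b0 < c0 -> a < b -> b < c -> a0 < b -> a < b0 -> b0 < c -> b < c0 -> e < f -> e != a -> (e < a -> a < b0 -> a0 < f -> f < c -> False) -> (b < c -> c < f -> e < a -> a < b -> False) -> f != c -> (a0 < e /\ e < b0 /\ b0 < f /\ f < c0) -> a < e.
Proof. move=> *; lia. Qed.

Lemma nat_2_e_b (a0 b0 c0 a b c e f : nat) : a0 < b0 -> b0 < c0 -> a < b -> b < c -> a0 < b -> a < b0 -> b0 < c -> b < c0 -> e < f -> e != b -> (b < e -> e < b0 -> a0 < a -> a < f -> False) -> a0 != a -> (a < a0 -> a0 < f -> e < c -> c < c0 -> False) -> (f < c0 -> c0 < c -> b < e -> e < b0 -> False) -> c0 != c -> (a0 < e /\ e < b0 /\ b0 < f /\ f < c0) -> e < b.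
Proof. move=> *; lia. Qed.

Lemma nat_2_b_f (a0 b0 c0 a b c e f : nat) : a0 < b0 -> b0 < c0 -> a < b -> b < c -> a0 < b -> a < b0 -> b0 < c -> b < c0 -> e < f -> f != b -> (e < c -> c < c0 -> b0 < f -> f < b -> False) -> c0 != c -> (a0 < a -> a < b0 -> a0 < c0 -> c0 < c -> False) -> (b0 < f -> f < b -> a < a0 -> a0 < e -> False) -> a0 != a -> (a0 < e /\ e < b0 /\ b0 < f /\ f < c0) -> b < f.
Proof. move=> *; lia. Qed.

Lemma nat_2_f_c (a0 b0 c0 a b c e f : nat) : a0 < b0 -> b0 < c0 -> a < b -> b < c -> a0 < b -> a < b0 -> b0 < c -> b < c0 -> e < f -> f != c -> (a < e -> e < c0 -> b0 < c -> c < f -> False) -> (b < c -> c < f -> e < a -> a < b -> False) -> e != a -> (a0 < e /\ e < b0 /\ b0 < f /\ f < c0) -> f < c.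
Proof. move=> *; lia. Qed.

Lemma nat_3_b_e (a0 b0 c0 a b c e f : nat) : a0 < b0 -> b0 < c0 -> a < b -> b < c -> a0 < b -> a < b0 -> b0 < c -> b < c0 -> e < f -> a0 != a -> (b0 < e -> e < b -> a < a0 -> a0 < f -> False) -> e != b -> (a0 < a -> a < b0 -> a0 < c0 -> c0 < c -> False) -> (f < c -> c < c0 -> b0 < e -> e < b -> False) -> c0 != c -> (a < e -> e < c -> b < c -> c < f -> False) -> f != c -> (b0 < e /\ f < c0) -> b < e.
Proof. move=> *; lia. Qed.

Lemma nat_3_f_c (a0 b0 c0 a b c e f : nat) : a0 < b0 -> b0 < c0 -> a < b -> b < c -> a0 < b -> a < b0 -> b0 < c -> b < c0 -> e < f -> (a < e -> e < c0 -> b0 < c -> c < f -> False) -> f != c -> (b0 < e /\ f < c0) -> f < c.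
Proof. move=> *; lia. Qed.

Lemma nat_4_c_e (a0 b0 c0 a b c e f : nat) : a0 < b0 -> b0 < c0 -> a < b -> b < c -> a0 < b -> a < b0 -> b0 < c -> b < c0 -> e < f -> (a0 < e -> e < c -> b < c0 -> c0 < f -> False) -> e != c -> (c0 < e) -> c < e.
Proof. move=> *; lia. Qed.

Lemma avoidP n (pi : 'S_n) : avoids231 pi ->
  forall i j k : 'I_n, i < j -> j < k -> pi k < pi i -> pi i < pi j -> False.
Proof. move=> H i j k h1 h2 h3 h4; apply: H; exists i, j, k; split => //; exact/andP. Qed.

Lemma distinct3 n (pi : 'S_n) (a b c e f : 'I_n) :
  is_3cycle_abc pi (a, b, c) -> pi e = f -> pi f = e ->
  [/\ (e : nat) != a, (e : nat) != b, (e : nat) != c &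
      [/\ (f : nat) != a, (f : nat) != b & (f : nat) != c]].
Proof.
case=> ab bc pa pc pb pe pf.
split; [..| split]; apply/eqP => /ord_inj E.
1-3: rewrite E ?pa ?pb ?pc in pe; rewrite -pe ?pa ?pb ?pc in pf;
  by [move: ab; rewrite -E -pf ltnn | move: bc; rewrite -E -pf ltnn |
      have := ltn_trans ab bc; rewrite -E -pf ltnn].
all: rewrite E ?pa ?pb ?pc in pf; rewrite -pf ?pa ?pb ?pc in pe;
  by [move: ab; rewrite -E -pe ltnn | move: bc; rewrite -E -pe ltnn |
      have := ltn_trans ab bc; rewrite -E -pe ltnn].
Qed.

Lemma pair_facts n (pi : 'S_n) (S : {set 'I_n * 'I_n * 'I_n}) (e f : 'I_n)
  (a0 b0 c0 a b c : 'I_n) :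
  avoids231 pi -> crossing_collection pi S ->
  e < f -> pi e = f -> pi f = e ->
  (a0, b0, c0) \in S -> (a, b, c) \in S ->
  [/\ f < a0 -> f < a,
   a0 < e /\ f < b0 -> a < e /\ f < b,
   a0 < e /\ e < b0 /\ b0 < f /\ f < c0 -> a < e /\ e < b /\ b < f /\ f < c,
   b0 < e /\ f < c0 -> b < e /\ f < c &
   c0 < e -> c < e].
Proof.
move=> /avoidP H [_ H3 Hx] ef pe pf S0 S1.
have [T0|T0] := eqVneq (a0, b0, c0) (a, b, c).
  by case: T0 => <- <- <-; split.
have C0 := H3 _ S0; have C1 := H3 _ S1.
have [d1 d2 d3 [d4 d5 d6]] := @distinct3 _ _ _ _ _ _ _ C0 pe pf.
have [d7 d8 d9 [d10 d11 d12]] := @distinct3 _ _ _ _ _ _ _ C1 pe pf.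
case: C0 => ab0 bc0 pa0 pc0 pb0; case: C1 => ab1 bc1 pa1 pc1 pb1.
have /andP[x1 _] := Hx _ _ _ S0 S1 S0.
have /andP[x2 _] := Hx _ _ _ S1 S0 S1.
have /andP[_ x3] := Hx _ _ _ S0 S0 S1.
have /andP[_ x4] := Hx _ _ _ S1 S1 S0.
have da : (a0 : nat) != a.
  apply/eqP=> /ord_inj E; have ec : c0 = c by rewrite -pa0 -pa1 E.
  have eb : b0 = b by rewrite -pc0 -pc1 ec.
  by move: T0; rewrite E eb ec eqxx.
have db : (b0 : nat) != b.
  apply/eqP=> /ord_inj E; have ea : a0 = a by rewrite -pb0 -pb1 E.
  have ec : c0 = c by rewrite -pa0 -pa1 ea.
  by move: T0; rewrite E ea ec eqxx.
have dc : (c0 : nat) != c.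
  apply/eqP=> /ord_inj E; have eb : b0 = b by rewrite -pc0 -pc1 E.
  have ea : a0 = a by rewrite -pb0 -pb1 eb.
  by move: T0; rewrite E ea eb eqxx.
have pis := (pa0, pb0, pc0, pa1, pb1, pc1, pe, pf).
split.
- move=> h; apply: (nat_0_f_a a0 b0 c0 a b c e f) => //; try (move=> h1 h2 h3 h4; apply: (H _ _ _ h1 h2); by rewrite ?pis); try tauto.
- move=> h; split.
  + apply: (nat_1_a_e a0 b0 c0 a b c e f) => //; try (move=> h1 h2 h3 h4; apply: (H _ _ _ h1 h2); by rewrite ?pis); try tauto.
  + apply: (nat_1_f_b a0 b0 c0 a b c e f) => //; try (move=> h1 h2 h3 h4; apply: (H _ _ _ h1 h2); by rewrite ?pis); try tauto.
- move=> h; split; [|split; [|split]].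
  + apply: (nat_2_a_e a0 b0 c0 a b c e f) => //; try (move=> h1 h2 h3 h4; apply: (H _ _ _ h1 h2); by rewrite ?pis); try tauto.
  + apply: (nat_2_e_b a0 b0 c0 a b c e f) => //; try (move=> h1 h2 h3 h4; apply: (H _ _ _ h1 h2); by rewrite ?pis); try tauto.
  + apply: (nat_2_b_f a0 b0 c0 a b c e f) => //; try (move=> h1 h2 h3 h4; apply: (H _ _ _ h1 h2); by rewrite ?pis); try tauto.
  + apply: (nat_2_f_c a0 b0 c0 a b c e f) => //; try (move=> h1 h2 h3 h4; apply: (H _ _ _ h1 h2); by rewrite ?pis); try tauto.
- move=> h; split.
  + apply: (nat_3_b_e a0 b0 c0 a b c e f) => //; try (move=> h1 h2 h3 h4; apply: (H _ _ _ h1 h2); by rewrite ?pis); try tauto.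
  + apply: (nat_3_f_c a0 b0 c0 a b c e f) => //; try (move=> h1 h2 h3 h4; apply: (H _ _ _ h1 h2); by rewrite ?pis); try tauto.
- move=> h; apply: (nat_4_c_e a0 b0 c0 a b c e f) => //; try (move=> h1 h2 h3 h4; apply: (H _ _ _ h1 h2); by rewrite ?pis); try tauto.
Qed.

Theorem lemma3p4 (n : nat) (pi : 'S_n) (S : {set 'I_n * 'I_n * 'I_n})
    (e f : 'I_n) :
  avoids231 pi ->
  crossing_collection pi S ->
  e < f -> pi e = f -> pi f = e ->
  let A := blockA S in let B := blockB S in let C := blockC S in
  elt_lt_set f A \/
  [/\ set_lt_elt A e, e < f & elt_lt_set f B] \/
  [/\ set_lt_elt A e, elt_lt_set e B, set_lt_elt B f & elt_lt_set f C] \/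
  [/\ set_lt_elt B e, e < f & elt_lt_set f C] \/
  set_lt_elt C e.
Proof.
move=> H Hc ef pe pf A B C.
have [Sne H3 Hx] := Hc.
case/set0Pn: Sne => [[[a0 b0] c0] S0].
have P := fun a b c (S1 : (a, b, c) \in S) =>
  @pair_facts _ _ _ _ _ _ _ _ _ _ _ H Hc ef pe pf S0 S1.
have C0 := H3 _ S0.
have [d1 d2 d3 [d4 d5 d6]] := @distinct3 _ _ _ _ _ _ _ C0 pe pf.
have H' := @avoidP _ _ H.
case: C0 => ab0 bc0 pa0 pc0 pb0.
have pis := (pa0, pb0, pc0, pe, pf).
have := (nat_single a0 b0 c0 a0 b0 c0 e f) ab0 bc0 ab0 bc0 ab0 ab0 bc0 bc0 ef.
move=> Hs.
have {Hs} : (f < a0) \/ (a0 < e /\ f < b0) \/ (a0 < e /\ e < b0 /\ b0 < f /\ f < c0)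
   \/ (b0 < e /\ f < c0) \/ c0 < e.
  apply: Hs => //; move=> h1 h2 h3 h4; apply: (H' _ _ _ h1 h2); by rewrite ?pis.
rewrite /A /B /C /elt_lt_set /set_lt_elt /blockA /blockB /blockC.
case=> [h|[h|[h|[h|h]]]].
- left=> x /imsetP [[[a b] c] S1 ->] /=.
  by case: (P a b c S1) => h1 _ _ _ _; apply: h1.
- right; left; split=> // x /imsetP [[[a b] c] S1 ->] /=;
  by case: (P a b c S1) => _ h1 _ _ _; case: (h1 h).
- right; right; left; split=> // x /imsetP [[[a b] c] S1 ->] /=;
  by case: (P a b c S1) => _ _ h1 _ _; case: (h1 h) => [? [? [? ?]]].
- right; right; right; left; split=> // x /imsetP [[[a b] c] S1 ->] /=;
  by case: (P a b c S1) => _ _ _ h1 _; case: (h1 h).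
- right; right; right; right=> x /imsetP [[[a b] c] S1 ->] /=.
  by case: (P a b c S1) => _ _ _ _ h1; apply: h1.
Qed.
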